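(* Let $\ell=2m+1\ge3$, $a\in\mathfrak o_\ell^\times$ with image $\bar a\in\mathfrak o_m$, let $x\in\mathfrak g(\mathfrak o_m)$ be an $\bar a$-regular element and $\tilde x\in\mathfrak g(\mathfrak o_\ell)$ any lift of $x$. Then $\mathbf U(\mathfrak o_\ell)\cap C_{\mathbf G(\mathfrak o_\ell)}(\tilde x)K_\ell^m=\mathbf U(\varpi^m\mathfrak o_\ell)$.
   Context: $\mathfrak o$: ring of integers of a non-archimedean local field, uniformizer $\varpi$, residue field $\mathbb F_q$ of characteristic $p$; $\mathfrak o_r=\mathfrak o/\varpi^r\mathfrak o$. Either $\mathbf G={\rm GL}_n$, $\mathfrak g=M_n$, or $\mathbf G={\rm SL}_n$, $\mathfrak g=\mathfrak{sl}_n$ with $p$ odd, $p\nmid n$. $\mathbf U(\mathfrak o_\ell)$: upper unitriangular matrices in $\mathbf G(\mathfrak o_\ell)$; $\mathbf U(\varpi^k\mathfrak o_\ell)$: those with strictly upper triangular entries in $\varpi^k\mathfrak o_\ell$. $K_\ell^m=\ker(\mathbf G(\mathfrak o_\ell)\to\mathbf G(\mathfrak o_m))$. For $\alpha\in\mathfrak o_m^\times$, an $\alpha$-regular element of $\mathfrak g(\mathfrak o_m)$ is a matrix with $(2,1)$ entry $\alpha$, $(i+1,i)$ entries $1$ for $2\le i\le n-1$, arbitrary last column, other entries $0$. $C_{\mathbf G(\mathfrak o_\ell)}(\tilde x)$ is the centralizer of $\tilde x$ in $\mathbf G(\mathfrak o_\ell)$. *)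

(* Defs.v *)
From HB Require Import structures.
From mathcomp Require Import all_boot all_order all_algebra.
Set Implicit Arguments. Unset Strict Implicit. Unset Printing Implicit Defensive.
Import GRing.Theory.
Local Open Scope ring_scope.

(* Elements of o_k = o / varpi^k o are represented by elements of o;
   [congr w k x y] means x = y in o_k. *)
Definition congr (O : comNzRingType) (w : O) (k : nat) (x y : O) : Prop :=
  exists z : O, x - y = w ^+ k * z.

Definition mcongr (O : comNzRingType) (w : O) (k n : nat) (A B : 'M[O]_n) : Prop :=
  forall i j, congr w k (A i j) (B i j).

(* o is the ring of integers of a non-archimedean local field with
   uniformizer w and residue field of characteristic p, i.e. a complete
   discrete valuation ring with uniformizer w and finite residue field. *)
Definition local_integers (O : idomainType) (w : O) (p : nat) : Prop :=
  [/\ w != 0 /\ w \isn't a GRing.unit,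
      (forall x : O, x != 0 -> exists k u, u \is a GRing.unit /\ x = u * w ^+ k),
      (forall f : nat -> O, (forall k, congr w k (f k.+1) (f k)) ->
          exists y, forall k, congr w k y (f k)),
      (exists s : seq O, forall x : O, exists2 y, y \in s & congr w 1 x y)
    &
      prime p /\ congr w 1 (p%:R) 0].

Definition unit_mod (O : comNzRingType) (w : O) (k : nat) (x : O) : Prop :=
  exists y, congr w k (x * y) 1.

(* g in G(o_k): G = SL_n if sl, GL_n otherwise *)
Definition inG (O : comNzRingType) (w : O) (sl : bool) (k n : nat) (g : 'M[O]_n) : Prop :=
  if sl then congr w k (\det g) 1 else unit_mod w k (\det g).

(* X in Lie G (o_k): sl_n if sl, M_n otherwise *)
Definition inLie (O : comNzRingType) (w : O) (sl : bool) (k n : nat) (X : 'M[O]_n) : Prop :=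
  if sl then congr w k (\tr X) 0 else True.

(* x in g(o_k) is alpha-regular: (2,1) entry alpha, (i+1,i) entries 1 for
   2 <= i <= n-1, arbitrary last column, other entries 0 (0-based indices). *)
Definition regular_elt (O : comNzRingType) (w : O) (k n : nat) (alpha : O) (x : 'M[O]_n) : Prop :=
  forall i j : 'I_n, (j.+1 != n)%N ->
    congr w k (x i j)
      (if (i == j.+1 :> nat) then (if (j == 0 :> nat) then alpha else 1) else 0).

Definition inU (O : comNzRingType) (w : O) (k n : nat) (g : 'M[O]_n) : Prop :=
  forall i j : 'I_n,
    ((j < i)%N -> congr w k (g i j) 0) /\ ((i == j :> nat) -> congr w k (g i j) 1).

Definition inUw (O : comNzRingType) (w : O) (k m n : nat) (g : 'M[O]_n) : Prop :=
  inU w k g /\ forall i j : 'I_n, (i < j)%N ->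
     exists z, congr w k (g i j) (w ^+ m * z).

Definition inCK (O : comNzRingType) (w : O) (sl : bool) (k m n : nat) (xt g : 'M[O]_n) : Prop :=
  exists c kk : 'M[O]_n,
    [/\ inG w sl k c, mcongr w k (c *m xt) (xt *m c),
        inG w sl k kk, mcongr w m kk 1%:M
      & mcongr w k g (c *m kk)].

(* Main.v *)
Require Import Defs.
From HB Require Import structures.
From mathcomp Require Import all_boot all_order all_algebra.
Local Open Scope ring_scope.
Import GRing.Theory.
Section Cg.
Context {O : comNzRingType} {w : O}.

Lemma congr_refl {k x} : congr w k x x.
Proof. by exists 0; rewrite subrr mulr0. Qed.
Lemma congr_sym {k x y} : congr w k x y -> congr w k y x.
Proof. by case=> z h; exists (- z); rewrite mulrN -h opprB. Qed.
Lemma congr_trans {k x y t} : congr w k x y -> congr w k y t -> congr w k x t.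
Proof. by case=> z1 h1 [z2 h2]; exists (z1 + z2); rewrite mulrDr -h1 -h2 addrA subrK. Qed.
Lemma congrD {k x1 x2 y1 y2} : congr w k x1 x2 -> congr w k y1 y2 -> congr w k (x1 + y1) (x2 + y2).
Proof. by case=> z1 h1 [z2 h2]; exists (z1 + z2); rewrite mulrDr -h1 -h2 opprD addrACA. Qed.
Lemma congrM {k x1 x2 y1 y2} : congr w k x1 x2 -> congr w k y1 y2 -> congr w k (x1 * y1) (x2 * y2).
Proof.
case=> z1 h1 [z2 h2]; exists (z1 * y1 + x2 * z2).
have -> : x1 * y1 - x2 * y2 = (x1 - x2) * y1 + x2 * (y1 - y2) by rewrite mulrBl mulrBr addrA subrK.
by rewrite h1 h2 mulrDr -!mulrA [x2 * _]mulrCA.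
Qed.
Lemma congr_weaken {k k' x y} : (k' <= k)%N -> congr w k x y -> congr w k' x y.
Proof.
move=> hle [z h]; exists (w ^+ (k - k') * z).
by rewrite h mulrA -exprD subnKC.
Qed.
Lemma congr_sum {k} {I : finType} {F G : I -> O} :
  (forall i, congr w k (F i) (G i)) -> congr w k (\sum_i F i) (\sum_i G i).
Proof. move=> h; apply: (big_ind2 (congr w k)) => //; [exact: congr_refl| move=> ? ? ? ?; exact: congrD]. Qed.
Lemma congr_prod {k} {I : finType} {F G : I -> O} :
  (forall i, congr w k (F i) (G i)) -> congr w k (\prod_i F i) (\prod_i G i).
Proof. move=> h; apply: (big_ind2 (congr w k)) => //; [exact: congr_refl| move=> ? ? ? ?; exact: congrM]. Qed.

Lemma mcongr_mul {k n} {A A' B B' : 'M[O]_n} : mcongr w k A A' -> mcongr w k B B' ->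
  mcongr w k (A *m B) (A' *m B').
Proof. move=> hA hB i j; rewrite !mxE; apply: congr_sum => l; exact: congrM. Qed.
Lemma mcongr_trans {k n} {A B C : 'M[O]_n} : mcongr w k A B -> mcongr w k B C -> mcongr w k A C.
Proof. move=> h1 h2 i j; exact: congr_trans (h1 i j) (h2 i j). Qed.
Lemma mcongr_sym {k n} {A B : 'M[O]_n} : mcongr w k A B -> mcongr w k B A.
Proof. move=> h i j; exact: congr_sym. Qed.
Lemma mcongr_refl {k n} {A : 'M[O]_n} : mcongr w k A A.
Proof. move=> i j; exact: congr_refl. Qed.
Lemma mcongr_weaken {k k' n} {A B : 'M[O]_n} : (k' <= k)%N -> mcongr w k A B -> mcongr w k' A B.
Proof. move=> le h i j; exact: congr_weaken le (h i j). Qed.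

Lemma congr_det {k n} {A B : 'M[O]_n} : mcongr w k A B -> congr w k (\det A) (\det B).
Proof.
move=> h; rewrite /determinant; apply: congr_sum => s; apply: congrM; first exact: congr_refl.
apply: congr_prod => i; exact: h.
Qed.

Lemma congr_unit_cancel {k y s t} : congr w k (y * s) 0 -> congr w k (s * t) 1 -> congr w k y 0.
Proof.
move=> h1 h2; apply: (@congr_trans _ _ (y * s * t)).
  rewrite -mulrA; apply: congr_sym; rewrite -{2}[y]mulr1; apply: congrM => //; exact: congr_refl.
rewrite -(mul0r t); apply: congrM => //; exact: congr_refl.
Qed.

End Cg.
Section Core.
Context {O : comNzRingType} {w : O}.

Lemma step k n a (x g : 'M[O]_n) (i j : 'I_n) :
  unit_mod w k a -> regular_elt w k a x ->
  (forall i j : 'I_n, (j < i)%N -> congr w k (g i j) 0) ->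
  mcongr w k (g *m x) (x *m g) -> (i < j)%N ->
  (forall l j2 : 'I_n, i = l.+1 :> nat -> j = j2.+1 :> nat -> congr w k (g l j2) 0) ->
  congr w k (g i j) 0.
Proof.
move=> [t ht] hx hlow hc hij hprev.
have j0 : (0 < j)%N by apply: leq_ltn_trans hij.
have hj'n : (j.-1 < n)%N by apply: leq_ltn_trans (leq_pred j) (ltn_ord j).
pose j' : 'I_n := Ordinal hj'n.
have hj' : j'.+1 = j :> nat by rewrite /= prednK.
pose s := if (j' == 0 :> nat) then a else 1.
have hs : congr w k (s * (if (j' == 0 :> nat) then t else 1)) 1.
  by rewrite /s; case: ifP => _ //; rewrite mulr1; apply: congr_refl.
apply: (@congr_unit_cancel O w k (g i j) s _ _ hs).
have key : forall l : 'I_n, congr w k (x l j') (if l == j then s else 0).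
  move=> l; have := hx l j'; rewrite hj' (ltn_eqF (ltn_ord j)) => /(_ isT).
  by rewrite -[l == j]/(val l == val j).
have e1 : congr w k ((g *m x) i j') (g i j * s).
  rewrite mxE; apply: (@congr_trans _ _ _ _ (\sum_l g i l * (if l == j then s else 0))).
    by apply: congr_sum => l; apply: congrM; [apply: congr_refl| apply: key].
  rewrite (bigD1 j) //= eqxx big1 ?addr0; first exact: congr_refl.
  by move=> l /negbTE ->; rewrite mulr0.
have e2 : congr w k ((x *m g) i j') 0.
  rewrite mxE; apply: (@congr_trans _ _ _ _ (\sum_(l < n) (0:O))); last first.
    by rewrite big1_eq; apply: congr_refl.
  apply: congr_sum => l.
  rewrite -[0](mulr0 (x i l)) .
  case: (boolP (l.+1 == n)) => hl.
    apply: congrM; first exact: congr_refl.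
    apply: hlow; rewrite /= -ltnS prednK // (eqP hl) //.
  have := hx i l hl; case: ifP => hil hxil.
    apply: congrM; first exact: congr_refl.
    by apply: hprev => //; rewrite (eqP hil).
  rewrite mulr0 -(mul0r (g l j')); apply: congrM => //; exact: congr_refl.
apply: (@congr_trans O w k _ ((g *m x) i j')); first exact: congr_sym.
apply: (@congr_trans O w k _ ((x *m g) i j')); [exact: hc | exact: e2].
Qed.

Lemma core k n a (x g : 'M[O]_n) :
  unit_mod w k a -> regular_elt w k a x ->
  (forall i j : 'I_n, (j < i)%N -> congr w k (g i j) 0) ->
  mcongr w k (g *m x) (x *m g) ->
  forall i j : 'I_n, (i < j)%N -> congr w k (g i j) 0.
Proof.
move=> ha hx hlow hc.
suff H : forall i0 (i j : 'I_n), val i = i0 -> (i < j)%N -> congr w k (g i j) 0.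
  by move=> i j; exact: H.
elim=> [|i0 IH] i j hi hij; apply: (@step k n a x g i j ha hx hlow hc hij) => l j2 hl hj2.
  by rewrite hi in hl.
apply: IH; first by rewrite hi in hl; case: hl.
by rewrite -ltnS -hl -hj2.
Qed.
End Core.
Theorem lemma4p5 (O : idomainType) (w : O) (p : nat) (sl : bool) (n m : nat)
    (a : O) (x xt : 'M[O]_n) :
  local_integers w p ->
  (sl -> odd p /\ ~~ (p %| n)%N) ->
  (1 <= m)%N ->
  unit_mod w (2 * m).+1 a ->
  inLie w sl m x -> regular_elt w m a x ->
  inLie w sl (2 * m).+1 xt -> mcongr w m xt x ->
  forall g : 'M[O]_n,
    (inU w (2 * m).+1 g /\ inCK w sl (2 * m).+1 m xt g) <-> inUw w (2 * m).+1 m g.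
Proof.
move=> _ _ hm ha hLx hx hLxt hxt g.
have hml : (m <= (2 * m).+1)%N by apply: leqW; rewrite mul2n -addnn leq_addr.
split.
- case=> hU [c [kk [hGc hcx hGkk hkk hg]]].
  split; first exact: hU.
  move=> i j hij.
  have hgm : mcongr w m g c.
    apply: (mcongr_trans (mcongr_weaken hml hg)).
    rewrite -{2}[c]mulmx1; apply: mcongr_mul => //; exact: mcongr_refl.
  have hcomm : mcongr w m (g *m x) (x *m g).
    apply: (@mcongr_trans _ _ _ _ _ (c *m x)).
      apply: mcongr_mul => //; exact: mcongr_refl.
    apply: (@mcongr_trans _ _ _ _ _ (c *m xt)).
      apply: mcongr_mul; [exact: mcongr_refl | exact: mcongr_sym].
    apply: (@mcongr_trans _ _ _ _ _ (xt *m c)); first exact: mcongr_weaken hml hcx.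
    apply: (@mcongr_trans _ _ _ _ _ (x *m c)).
      apply: mcongr_mul => //; exact: mcongr_refl.
    apply: mcongr_mul; [exact: mcongr_refl | exact: mcongr_sym].
  have ham : unit_mod w m a by case: ha => t ht; exists t; exact: congr_weaken hml ht.
  have hlow : forall i j : 'I_n, (j < i)%N -> congr w m (g i j) 0.
    by move=> i' j' h; apply: congr_weaken hml _; apply: (hU i' j').1.
  have [z hz] := @core O w m n a x g ham hx hlow hcomm i j hij.
  exists z; exists 0; rewrite mulr0; move: hz; rewrite subr0 => ->; exact: subrr.
- move=> [hU hup]; split => //; exists 1%:M, g; split.
  + rewrite /inG det1; case: ifP => _; first exact: congr_refl.
    by exists 1; rewrite mulr1; exact: congr_refl.
  + by rewrite mul1mx mulmx1; exact: mcongr_refl.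
  + pose B : 'M[O]_n := \matrix_(i, j) (if (i < j)%N then g i j else (i == j)%:R).
    have hgB : mcongr w (2 * m).+1 g B.
      move=> i j; rewrite mxE; case: ltnP => hij; first exact: congr_refl.
      case: (boolP (i == j)) => hie.
        by apply: (hU i j).2; rewrite (eqP hie).
      apply: (hU i j).1; rewrite ltn_neqAle hij andbT.
      by apply: contra hie => /eqP e; apply/eqP/val_inj.
    have hB : \det B = 1.
      rewrite -det_tr det_trig; last first.
        apply/is_trig_mxP => i j hij; rewrite !mxE ltnNge (ltnW hij) /=.
        by case: eqP => // e; move: hij; rewrite e ltnn.
      by apply: big1 => i _; rewrite !mxE ltnn eqxx.
    have hd := congr_det hgB; rewrite hB in hd.
    rewrite /inG; case: ifP => _ //.
    by exists 1; rewrite mulr1.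
  + move=> i j; rewrite mxE.
    case: (ltngtP i j) => hij.
    * have [z hz] := hup i j hij.
      have hz' := congr_weaken hml hz.
      have -> : (i == j) = false by apply/eqP => e; move: hij; rewrite e ltnn.
      apply: (congr_trans hz').
      by exists z; rewrite subr0.
    * have -> : (i == j) = false by apply/eqP => e; move: hij; rewrite e ltnn.
      apply: congr_weaken hml _; exact: (hU i j).1.
    * have e : i = j by apply: val_inj.
      rewrite e eqxx /=; apply: congr_weaken hml _; apply: (hU j j).2; exact: eqxx.
  + by rewrite mul1mx; exact: mcongr_refl.
Qed.
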